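(* Let $A\in\mathbb{R}^{n\times n}$ be Hurwitz, $B\in\mathbb{R}^{n\times m}$, $C\in\mathbb{R}^{1\times n}$, and $M\in\mathbb{R}^{n\times n}$ symmetric. Let $W,V\in\mathbb{R}^{n\times r}$ with $W^\top V=I_r$. Define $\hat A=W^\top AV$, $\hat B=W^\top B$, $\hat C=CV$, $\hat M=V^\top MV$, and assume $\hat A$ is Hurwitz. Let $P$, $X$, $\hat P$ be the unique solutions of $$AP+PA^\top+BB^\top=0,\qquad AX+X\hat A^\top+B\hat B^\top=0,\qquad \hat A\hat P+\hat P\hat A^\top+\hat B\hat B^\top=0,$$ and let $K\in\mathbb{R}^{n\times r}$, $L\in\mathbb{R}^{r\times r}$ be the unique solutions of $$A^\top K+K\hat A-C^\top\hat C-2MX\hat M=0,\qquad \hat A^\top L+L\hat A+\hat C^\top\hat C+2\hat M\hat P\hat M=0.$$ Consider the cost function $$J_1(W,V)=\mathrm{tr}\big(CPC^\top-2CX\hat C^\top+\hat C\hat P\hat C^\top\big)+\mathrm{tr}\big(PMPM-2X^\top MX\hat M+\hat P\hat M\hat P\hat M\big),$$ regarded as a function of the two matrix variables $W,V\in\mathbb{R}^{n\times r}$ (through $\hat A,\hat B,\hat C,\hat M$). Then the partial-derivative matrices $J_{1,W}=\nabla_W J_1\in\mathbb{R}^{n\times r}$ and $J_{1,V}=\nabla_V J_1\in\mathbb{R}^{n\times r}$, defined entrywise by $(J_{1,W})_{ij}=\partial J_1/\partial W_{ij}$ and $(J_{1,V})_{ij}=\partial J_1/\partial V_{ij}$, are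 given by $$J_{1,W}=2\Big(AV\big(X^\top K+\hat PL\big)+BB^\top\big(K+WL\big)\Big),$$ $$J_{1,V}=2\Big(A^\top W\big(K^\top X+L\hat P\big)+C^\top C\big(V\hat P-X\big)+2MV\big(\hat P\hat M\hat P-X^\top MX\big)\Big).$$
   Context: This concerns a linear time-invariant system with quadratic output (LQO system) $\dot x=Ax+Bu$, $y=Cx+x^\top Mx$, and a reduced-order model of the same form with matrices $(\hat A,\hat B,\hat C,\hat M)$ obtained by Petrov–Galerkin projection. The function $J_1(W,V)$ equals the squared $H_2$ norm of the error system between the full and reduced LQO systems; equivalently $J_1=\mathrm{tr}(B^\top QB+2B^\top Y\hat B+\hat B^\top\hat Q\hat B)$, where $A^\top Q+QA+C^\top C+MPM=0$, $A^\top Y+Y\hat A-C^\top\hat C-MX\hat M=0$, and $\hat A^\top\hat Q+\hat Q\hat A+\hat C^\top\hat C+\hat M\hat P\hat M=0$. A matrix is Hurwitz if all its eigenvalues have negative real part. *)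

(* Defs.v *)
From HB Require Import structures.
From mathcomp Require Import all_boot all_order all_algebra.
From mathcomp Require Import all_classical all_reals.
From mathcomp Require Import topology normedtype derive.
From mathcomp Require Import complex.
Set Implicit Arguments. Unset Strict Implicit. Unset Printing Implicit Defensive.
Import Order.TTheory GRing.Theory Num.Theory.
Local Open Scope ring_scope.

Definition hurwitz (R : realType) (n : nat) (A : 'M[R]_n) : Prop :=
  forall z : R[i],
    eigenvalue (map_mx (fun x : R => (x%:C)%C) A) z ->
    complex.Re z < 0.

(* "The" solution X of the Sylvester equation  F X + X G + H = 0
   (an arbitrary solution if one exists, else 0); for Hurwitz F and G the
   solution exists and is unique, so this is the unique solution. *)
Definition sylv (R : realType) (p q : nat)
  (F : 'M[R]_p) (G : 'M[R]_q) (H : 'M[R]_(p, q)) : 'M[R]_(p, q) :=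
  xget 0 [set X | F *m X + X *m G + H = 0].

Definition J1 (R : realType) (n m r : nat)
  (A : 'M[R]_n) (B : 'M[R]_(n, m)) (C : 'M[R]_(1, n)) (M : 'M[R]_n)
  (W V : 'M[R]_(n, r)) : R :=
  let Ah := W^T *m A *m V in
  let Bh := W^T *m B in
  let Ch := C *m V in
  let Mh := V^T *m M *m V in
  let P := sylv A A^T (B *m B^T) in
  let X := sylv A Ah^T (B *m Bh^T) in
  let Ph := sylv Ah Ah^T (Bh *m Bh^T) in
  \tr (C *m P *m C^T - 2%:R *: (C *m X *m Ch^T) + Ch *m Ph *m Ch^T)
  + (\tr (P *m M *m P *m M) - 2%:R * \tr (X^T *m M *m X *m Mh)
     + \tr (Ph *m Mh *m Ph *m Mh)).

(* Main.v *)
Require Import Defs.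
From HB Require Import structures.
From mathcomp Require Import all_boot all_order all_algebra.
From mathcomp Require Import all_classical all_reals.
From mathcomp Require Import topology normedtype derive.
From mathcomp Require Import complex perm.
From mathcomp Require Import ring lra.
Import Order.TTheory GRing.Theory Num.Theory.
Import numFieldNormedType.Exports.
Local Open Scope ring_scope.
Set Implicit Arguments. Unset Strict Implicit. Unset Printing Implicit Defensive.

Lemma eig_unit (F : fieldType) n (A : 'M[F]_n) a :
  eigenvalue A a = (A - a%:M \notin unitmx).
Proof. by rewrite /eigenvalue /eigenspace kermx_eq0 row_free_unit. Qed.

Lemma hurwitz_tr (R : realType) n (A : 'M[R]_n) : hurwitz A -> hurwitz A^T.
Proof.
move=> hA z; rewrite -map_trmx eig_unit -unitmx_tr linearB /= trmxK tr_scalar_mx.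
by rewrite -eig_unit; apply: hA.
Qed.

Lemma prod_comm (F : fieldType) p q (Fm : 'M[F]_p) (G : 'M[F]_q) (Y : 'M_(p,q))
  (rs : seq F) : Fm *m Y + Y *m G = 0 ->
  (\prod_(z <- rs) (Fm - z%:M)) *m Y = Y *m \prod_(z <- rs) (- G - z%:M).
Proof.
move=> e; elim: rs => [|z rs IH]; first by rewrite !big_nil mul1mx mulmx1.
rewrite !big_cons -!mulmxE -mulmxA IH !mulmxA; congr (_ *m _).
rewrite mulmxBl mulmxBr mul_scalar_mx mul_mx_scalar mulmxN; congr (_ - _).
by apply/eqP; rewrite -addr_eq0 e.
Qed.

Lemma sylv_inj (R : realType) p q (F : 'M[R]_p) (G : 'M[R]_q) (Y : 'M[R]_(p,q)) :
  hurwitz F -> hurwitz G -> F *m Y + Y *m G = 0 -> Y = 0.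
Proof.
case: p F Y => [|p] F Y hF hG e; first by apply/matrixP => -[].
pose f := real_complex R.
have ef : (fun x : R => (x%:C)%C) = f by [].
have e' : map_mx f F *m map_mx f Y + map_mx f Y *m map_mx f G = 0.
  by rewrite -!map_mxM -map_mxD e map_mx0.
have [rs Hrs] := closed_field_poly_normal (char_poly (map_mx f F)).
have CH := Cayley_Hamilton (map_mx f F).
move: (CH); rewrite Hrs (monicP (char_poly_monic _)) scale1r rmorph_prod /=.
have -> : \prod_(z <- rs) horner_mx (map_mx f F) ('X - z%:P) =
          \prod_(z <- rs) (map_mx f F - z%:M).
  by apply: eq_bigr => z _; rewrite rmorphB /= horner_mx_X horner_mx_C.
move=> H0.
have := prod_comm rs e'; rewrite H0 mul0mx => /esym H1.
have U : \prod_(z <- rs) (- map_mx f G - z%:M) \in unitmx.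
  rewrite big_seq; apply: (big_ind (fun A : 'M_q => A \in unitmx)) => [|A1 A2 u1 u2|z zr].
  - exact: unitmx1.
  - by rewrite -mulmxE unitmx_mul u1 u2.
  - apply: contraT => nu.
    have ez : eigenvalue (map_mx f G) (- z).
      rewrite eig_unit.
      have -> : map_mx f G - (-z)%:M = (-1) *: (- map_mx f G - z%:M).
        by rewrite scaleN1r opprB raddfN /= opprK addrC opprK.
      by rewrite unitmxZ ?unitrN1.
    have ez' : eigenvalue (map_mx f F) z.
      rewrite eigenvalue_root_char Hrs rootZ ?root_prod_XsubC //.
      by rewrite (monicP (char_poly_monic _)) oner_neq0.
    have h1 := hF _ ez'; have h2 := hG _ ez.
    have : complex.Re (- z) = - complex.Re z by case: z {zr nu ez ez' h1 h2}.
    move=> e2; rewrite e2 oppr_lt0 in h2.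
    by have := lt_trans h1 h2; rewrite ltxx.
have := congr1 (mulmx ^~ (invmx (\prod_(z <- rs) (- map_mx f G - z%:M)))) H1.
rewrite mul0mx -mulmxA mulmxV // mulmx1 => /eqP; rewrite map_mx_eq0 => /eqP //.
Qed.

Lemma sd_eq (R : realType) (f g : R -> R) a b :
  f = g -> a = b -> is_derive (0:R) (1:R) f a -> is_derive (0:R) (1:R) g b.
Proof. by move=> -> ->. Qed.

Lemma sd_add (R : realType) (f g : R -> R) a b :
  is_derive (0:R) (1:R) f a -> is_derive (0:R) (1:R) g b ->
  is_derive (0:R) (1:R) (fun t => f t + g t) (a + b).
Proof. by move=> ? ?; apply: is_deriveD. Qed.

Lemma sd_opp (R : realType) (f : R -> R) a :
  is_derive (0:R) (1:R) f a -> is_derive (0:R) (1:R) (fun t => - f t) (- a).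
Proof. by move=> ?; apply: is_deriveN. Qed.

Lemma sd_mul (R : realType) (f g : R -> R) a b :
  is_derive (0:R) (1:R) f a -> is_derive (0:R) (1:R) g b ->
  is_derive (0:R) (1:R) (fun t => f t * g t) (f 0 * b + g 0 * a).
Proof. by move=> ? ?; apply: is_derive_eq. Qed.

Lemma sd_cst (R : realType) (c : R) : is_derive (0:R) (1:R) (fun _ => c) 0.
Proof. exact: is_derive_cst. Qed.

Lemma sd_id (R : realType) : is_derive (0:R) (1:R) (fun t => t) 1.
Proof. exact: is_derive_id. Qed.

Lemma sd_sum (R : realType) (I : Type) (s : seq I) (P : pred I)
  (h : I -> R -> R) (dh : I -> R) :
  (forall k, is_derive (0:R) (1:R) (h k) (dh k)) ->
  is_derive (0:R) (1:R) (fun t => \sum_(k <- s | P k) h k t)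
    (\sum_(k <- s | P k) dh k).
Proof.
move=> H; elim: s => [|k s IH].
  apply: (sd_eq _ _ (sd_cst 0)); last by rewrite big_nil.
  by apply/funext => t; rewrite big_nil.
case Pk: (P k).
  apply: (sd_eq _ _ (sd_add (H k) IH)).
    by apply/funext => t; rewrite big_cons Pk.
  by rewrite big_cons Pk.
apply: (sd_eq _ _ IH); first by apply/funext => t; rewrite big_cons Pk.
by rewrite big_cons Pk.
Qed.

Lemma sder_prod (R : realType) (I : Type) (s : seq I) (P : pred I)
  (h : I -> R -> R) :
  (forall k, derivable (h k) (0:R) (1:R)) ->
  derivable (fun t => \prod_(k <- s | P k) h k t) (0:R) (1:R).
Proof.
move=> H; elim: s => [|k s IH].
  have -> : (fun t : R => \prod_(k <- [::] | P k) h k t) = cst 1.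
    by apply/funext => t; rewrite big_nil.
  exact: derivable_cst.
case Pk: (P k).
  have -> : (fun t => \prod_(j <- k :: s | P j) h j t)
      = (h k * (fun t => \prod_(j <- s | P j) h j t)).
    by apply/funext => t; rewrite big_cons Pk.
  exact: derivableM.
have -> : (fun t => \prod_(j <- k :: s | P j) h j t)
      = (fun t => \prod_(j <- s | P j) h j t).
  by apply/funext => t; rewrite big_cons Pk.
exact: IH.
Qed.

Lemma sder_sum (R : realType) (I : Type) (s : seq I) (P : pred I)
  (h : I -> R -> R) :
  (forall k, derivable (h k) (0:R) (1:R)) ->
  derivable (fun t => \sum_(k <- s | P k) h k t) (0:R) (1:R).
Proof.
move=> H.
have := @sd_sum R I s P h (fun k => 'D_1 (h k) 0) (fun k => derivableP (H k)).
by case.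
Qed.

Definition mxd (R : realType) p q (f : R -> 'M[R]_(p,q)) (D : 'M[R]_(p,q)) :=
  forall i j, is_derive (0:R) (1:R) (fun t => f t i j) (D i j).

Lemma mxd_eq (R : realType) p q (f g : R -> 'M[R]_(p,q)) D D' :
  f = g -> D = D' -> mxd f D -> mxd g D'.
Proof. by move=> -> ->. Qed.

Lemma mxd_cst (R : realType) p q (A : 'M[R]_(p,q)) : mxd (fun _ => A) 0.
Proof. move=> i j; rewrite mxE; exact: sd_cst. Qed.

Lemma mxd_add (R : realType) p q (f g : R -> 'M[R]_(p,q)) Df Dg :
  mxd f Df -> mxd g Dg -> mxd (fun t => f t + g t) (Df + Dg).
Proof.
move=> hf hg i j; rewrite mxE.
apply: (sd_eq _ _ (sd_add (hf i j) (hg i j))) => //.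
by apply/funext => t; rewrite mxE.
Qed.

Lemma mxd_scale (R : realType) p q (c : R) (f : R -> 'M[R]_(p,q)) Df :
  mxd f Df -> mxd (fun t => c *: f t) (c *: Df).
Proof.
move=> hf i j; rewrite mxE.
apply: (sd_eq _ _ (sd_mul (sd_cst c) (hf i j))).
  by apply/funext => t; rewrite mxE.
by rewrite mulr0 addr0.
Qed.

Lemma mxd_opp (R : realType) p q (f : R -> 'M[R]_(p,q)) Df :
  mxd f Df -> mxd (fun t => - f t) (- Df).
Proof.
move=> hf i j; rewrite mxE.
apply: (sd_eq _ _ (sd_opp (hf i j))) => //.
by apply/funext => t; rewrite mxE.
Qed.

Lemma mxd_sub (R : realType) p q (f g : R -> 'M[R]_(p,q)) Df Dg :
  mxd f Df -> mxd g Dg -> mxd (fun t => f t - g t) (Df - Dg).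
Proof. by move=> hf hg; apply: mxd_add => //; apply: mxd_opp. Qed.

Lemma mxd_mul (R : realType) p q s (f : R -> 'M[R]_(p,q)) (g : R -> 'M[R]_(q,s))
  Df Dg : mxd f Df -> mxd g Dg ->
  mxd (fun t => f t *m g t) (Df *m g 0 + f 0 *m Dg).
Proof.
move=> hf hg i j.
have := @sd_sum R _ (index_enum 'I_q) xpredT (fun k t => f t i k * g t k j)
  (fun k => f 0 i k * Dg k j + g 0 k j * Df i k)
  (fun k => sd_mul (hf i k) (hg k j)).
apply: sd_eq.
  by apply/funext => t; rewrite mxE.
rewrite !mxE big_split /= addrC; congr (_ + _); apply: eq_bigr => k _;
  by rewrite mulrC.
Qed.

Lemma mxd_tr (R : realType) p q (f : R -> 'M[R]_(p,q)) Df :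
  mxd f Df -> mxd (fun t => (f t)^T) Df^T.
Proof.
move=> hf i j; rewrite mxE.
by apply: (sd_eq _ _ (hf j i)) => //; apply/funext => t; rewrite mxE.
Qed.

Lemma mxd_lin (R : realType) p q (E : 'M[R]_(p,q)) : mxd (fun t => t *: E) E.
Proof.
move=> i j.
have := sd_mul (@sd_id R) (sd_cst (E i j)).
apply: sd_eq.
  by apply/funext => t; rewrite mxE.
by rewrite mul0r add0r mulr1.
Qed.

Lemma sd_trace (R : realType) p (f : R -> 'M[R]_p) Df :
  mxd f Df -> is_derive (0:R) (1:R) (fun t => \tr (f t)) (\tr Df).
Proof.
move=> hf.
exact: (@sd_sum R _ (index_enum 'I_p) xpredT (fun k t => f t k k) (fun k => Df k k)
  (fun k => hf k k)).
Qed.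

Lemma isd_der (R : realType) (f : R -> R) a :
  is_derive (0:R) (1:R) f a -> derivable f (0:R) (1:R).
Proof. by case. Qed.

Definition mxdv (R : realType) p q (f : R -> 'M[R]_(p,q)) :=
  forall i j, derivable (fun t => f t i j) (0:R) (1:R).

Lemma mxd_dv (R : realType) p q (f : R -> 'M[R]_(p,q)) D : mxd f D -> mxdv f.
Proof. by move=> h i j; apply: isd_der (h i j). Qed.

Lemma der_det (R : realType) n (L : R -> 'M[R]_n) :
  mxdv L -> derivable (fun t => \det (L t)) (0:R) (1:R).
Proof.
move=> hL; rewrite /determinant.
apply: sder_sum => s.
have h2 : derivable (fun t => \prod_i L t i (s i)) (0:R) (1:R).
  by apply: sder_prod => i; apply: hL.
exact: (derivableM (derivable_cst _ _ _) h2).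
Qed.

Lemma der_adj (R : realType) n (L : R -> 'M[R]_n) :
  mxdv L -> mxdv (fun t => \adj (L t)).
Proof.
move=> hL i j.
have -> : (fun t => \adj (L t) i j) =
  (cst ((-1) ^+ (j + i)) * (fun t => \det (row' j (col' i (L t))))).
  by apply/funext => t; rewrite mxE.
apply: derivableM; first exact: derivable_cst.
apply: der_det => a b.
have -> : (fun t => row' j (col' i (L t)) a b) = (fun t => L t (lift j a) (lift i b)).
  by apply/funext => t; rewrite !mxE.
exact: hL.
Qed.

Definition sylop (R : realType) p q (F0 : 'M[R]_p) (G0 : 'M[R]_q)
  (X : 'M[R]_(p,q)) := F0 *m X + X *m G0.

Fact sylop_semilin (R : realType) p q (F0 : 'M[R]_p) (G0 : 'M[R]_q) :
  semilinear (sylop F0 G0).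
Proof.
split=> [a A|A1 A2]; rewrite /sylop.
  by rewrite -scalemxAr -scalemxAl scalerDr.
by rewrite mulmxDr mulmxDl addrACA.
Qed.

HB.instance Definition _ (R : realType) p q (F0 : 'M[R]_p) (G0 : 'M[R]_q) :=
  GRing.isSemilinear.Build R 'M[R]_(p,q) 'M[R]_(p,q) _ (sylop F0 G0)
    (sylop_semilin F0 G0).

Lemma mxvec_der (R : realType) p q (f : R -> 'M[R]_(p,q)) :
  mxdv f -> mxdv (fun t => mxvec (f t)).
Proof.
move=> h i l; rewrite (ord1 i); case/mxvec_indexP: l => a b.
have -> : (fun t => mxvec (f t) 0 (mxvec_index a b)) = (fun t => f t a b).
  by apply/funext => t; rewrite mxvecE.
exact: h.
Qed.

Lemma mxdv_mul (R : realType) p q s (f : R -> 'M[R]_(p,q)) (g : R -> 'M[R]_(q,s)) :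
  mxdv f -> mxdv g -> mxdv (fun t => f t *m g t).
Proof.
move=> hf hg.
have df : mxd f (\matrix_(i,j) 'D_1 (fun t => f t i j) 0).
  by move=> i j; rewrite mxE; apply: derivableP.
have dg : mxd g (\matrix_(i,j) 'D_1 (fun t => g t i j) 0).
  by move=> i j; rewrite mxE; apply: derivableP.
exact: mxd_dv (mxd_mul df dg).
Qed.

Lemma vecL (R : realType) p q (F0 : 'M[R]_p) (G0 : 'M[R]_q) Y :
  mxvec Y *m lin_mx (sylop F0 G0) = mxvec (F0 *m Y + Y *m G0).
Proof. by rewrite mul_vec_lin. Qed.

Lemma sol_char (R : realType) p q (F0 : 'M[R]_p) (G0 : 'M[R]_q) (H0 : 'M[R]_(p,q)) :
  let L := lin_mx (sylop F0 G0) in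
  \det L != 0 ->
  forall Y, F0 *m Y + Y *m G0 + H0 = 0 <->
    Y = (\det L)^-1 *: vec_mx (- (mxvec H0 *m \adj L)).
Proof.
move=> L dL Y; split => [e|->].
  apply: (can_inj mxvecK); rewrite linearZ /= vec_mxK.
  have e1 : mxvec Y *m L = - mxvec H0.
    by rewrite vecL; apply/eqP; rewrite -addr_eq0 -linearD /= e linear0.
  have := congr1 (mulmx^~ (\adj L)) e1.
  rewrite -mulmxA mul_mx_adj mul_mx_scalar mulNmx => <-.
  by rewrite scalerA mulVf // scale1r.
apply: (can_inj mxvecK); rewrite linearD /= -vecL linearZ /= vec_mxK.
rewrite -/L -scalemxAl mulNmx -mulmxA mul_adj_mx mul_mx_scalar scalerN scalerA mulVf //.
by rewrite scale1r linear0 addNr.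
Qed.

Lemma sylv_eq (R : realType) p q (F0 : 'M[R]_p) (G0 : 'M[R]_q) (H0 : 'M[R]_(p,q)) Y :
  F0 *m Y + Y *m G0 + H0 = 0 -> (forall Z, F0 *m Z + Z *m G0 = 0 -> Z = 0) ->
  sylv F0 G0 H0 = Y.
Proof.
move=> e inj; apply: xget_unique => // Z /= eZ.
apply/eqP; rewrite -subr_eq0; apply/eqP; apply: inj.
have eZ' : F0 *m Z + Z *m G0 = - H0 by apply/eqP; rewrite -addr_eq0 eZ.
have eY' : F0 *m Y + Y *m G0 = - H0 by apply/eqP; rewrite -addr_eq0 e.
by rewrite mulmxBr mulmxBl addrACA -opprD eY' eZ' subrr.
Qed.

Lemma isd_uniq (R : realType) (f : R -> R) a b :
  is_derive (0:R) (1:R) f a -> is_derive (0:R) (1:R) f b -> a = b.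
Proof. by move=> [_ ea] [_ eb]; rewrite -ea -eb. Qed.

Lemma sylv_der (R : realType) p q (F : R -> 'M[R]_p) (G : R -> 'M[R]_q)
  (H : R -> 'M[R]_(p,q)) dF dG dH :
  mxd F dF -> mxd G dG -> mxd H dH ->
  (forall Y, F 0 *m Y + Y *m G 0 = 0 -> Y = 0) ->
  exists S', mxd (fun t => sylv (F t) (G t) (H t)) S' /\
   F 0 *m sylv (F 0) (G 0) (H 0) + sylv (F 0) (G 0) (H 0) *m G 0 + H 0 = 0 /\
   F 0 *m S' + S' *m G 0 + (dF *m sylv (F 0) (G 0) (H 0)
      + sylv (F 0) (G 0) (H 0) *m dG + dH) = 0.
Proof.
move=> hF hG hH inj.
pose L t := lin_mx (sylop (F t) (G t)).
pose d t := \det (L t).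
pose S t := (d t)^-1 *: vec_mx (- (mxvec (H t) *m \adj (L t))).
have dL : mxdv L.
  move=> k l; rewrite /L /lin_mx /lin1_mx.
  have -> : (fun t => (\matrix[lin1_mx_key]_(i, j) (mxvec \o sylop (F t) (G t) \o vec_mx)
      (delta_mx 0 i) 0 j) k l) =
    (fun t => mxvec (F t *m vec_mx (delta_mx 0 k) + vec_mx (delta_mx 0 k) *m G t) 0 l).
    by apply/funext => t; rewrite mxE.
  apply: mxvec_der.
  apply: mxd_dv (mxd_add (mxd_mul hF (mxd_cst _)) (mxd_mul (mxd_cst _) hG)).
have dd : derivable d (0:R) (1:R) by apply: der_det.
have d0 : d 0 != 0.
  apply/negP => /det0P [v vn0 vL].
  have : vec_mx v = 0.
    apply: inj; apply: (can_inj mxvecK); rewrite -vecL vec_mxK linear0.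
    exact: vL.
  by move/eqP; rewrite vec_mx_eq0 (negbTE vn0).
have dX : mxdv (fun t => - (mxvec (H t) *m \adj (L t))).
  move=> i j.
  have -> : (fun t => (- (mxvec (H t) *m \adj (L t))) i j) =
     - (fun t => (mxvec (H t) *m \adj (L t)) i j).
    by apply/funext => t; rewrite mxE.
  apply: derivableN.
  apply: mxdv_mul; first by apply: mxvec_der; apply: mxd_dv hH.
  exact: der_adj.
have dS : mxdv S.
  move=> i j.
  have -> : (fun t => S t i j) = (fun t => (d t)^-1 *
      (- (mxvec (H t) *m \adj (L t))) 0 (mxvec_index i j)).
    by apply/funext => t; rewrite /S !mxE.
  exact: (derivableM (derivableV d0 dd) (dX 0 (mxvec_index i j))).
have nd : \forall t \near 0, d t != 0.
  have /derivable1_diffP/differentiable_continuous dc := dd.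
  have : nbhs (d 0) (fun x : R => x != 0).
    exists `|d 0|; first by rewrite /= normr_gt0.
    move=> y /= yl; apply/eqP => y0; by move: yl; rewrite y0 subr0 ltxx.
  by move=> hh; exact: (dc _ hh).
have eqS : forall t, d t != 0 -> sylv (F t) (G t) (H t) = S t.
  move=> t dt; apply: xget_unique; first by apply/(sol_char _ dt).
  by move=> Y /= /(sol_char _ dt).
pose S' := \matrix_(i,j) 'D_1 (fun t => S t i j) 0.
have hS : mxd S S' by move=> i j; rewrite mxE; apply: derivableP.
exists S'; split.
  move=> i j; apply: near_eq_is_derive (hS i j).
  by apply: filterS nd => t dt; rewrite eqS.
rewrite (eqS 0 d0); split; first by apply/(sol_char _ d0).
have hE := mxd_add (mxd_add (mxd_mul hF hS) (mxd_mul hS hG)) hH.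
set D := (_ + _ + _) in hE.
have z : D = 0.
  apply/matrixP => i j; rewrite [RHS]mxE.
  have h2 : is_derive (0:R) (1:R) (fun _ : R => (0:R)) (D i j).
    apply: near_eq_is_derive (hE i j).
    apply: filterS nd => t dt.
    by rewrite ((sol_char _ dt (S t)).2 erefl) mxE.
  exact: isd_uniq h2 (sd_cst (0:R)).
rewrite -z /D; apply/matrixP => i j; rewrite !mxE.
ring.
Qed.

Lemma adj_trick (R : realType) p q (F : 'M[R]_p) (G : 'M[R]_q) (D N K : 'M[R]_(p,q)) :
  F *m D + D *m G + N = 0 ->
  \tr (D^T *m (F^T *m K + K *m G^T)) = - \tr (N^T *m K).
Proof.
move=> e.
have eF : F *m D = - (D *m G + N) by apply/eqP; rewrite -addr_eq0 addrA e.
rewrite mulmxDr mxtraceD mulmxA -trmx_mul eF linearN /= linearD /= trmx_mul.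
rewrite mulNmx mulmxDl raddfN /= mxtraceD.
rewrite [\tr (D^T *m (K *m G^T))]mxtrace_mulC -!mulmxA.
rewrite [\tr (K *m _)]mxtrace_mulC !mulmxA; ring.
Qed.

Lemma trT (R : realType) p q (A : 'M[R]_(p,q)) (B : 'M[R]_(q,p)) :
  \tr (A *m B) = \tr (B^T *m A^T).
Proof. by rewrite -trmx_mul mxtrace_tr. Qed.

Lemma gradW_alg (R : realType) n m r (A : 'M[R]_n) (B : 'M[R]_(n,m))
  (C : 'M[R]_(1,n)) (M : 'M[R]_n) (W V E X K dX : 'M[R]_(n,r))
  (Ah Mh Ph L dPh : 'M[R]_r) (Bh Eb : 'M[R]_(r,m)) (Ch : 'M[R]_(1,r)) (Ea : 'M[R]_r) :
  Ea = E^T *m A *m V -> Eb = E^T *m B -> Bh = W^T *m B ->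
  M^T = M -> Mh^T = Mh -> Ph^T = Ph -> L^T = L ->
  A^T *m K + K *m Ah - C^T *m Ch - 2%:R *: (M *m X *m Mh) = 0 ->
  Ah^T *m L + L *m Ah + Ch^T *m Ch + 2%:R *: (Mh *m Ph *m Mh) = 0 ->
  A *m dX + dX *m Ah^T + (X *m Ea^T + B *m Eb^T) = 0 ->
  Ah *m dPh + dPh *m Ah^T + (Ea *m Ph + Ph *m Ea^T + (Eb *m Bh^T + Bh *m Eb^T)) = 0 ->
  - 2%:R * \tr (C *m dX *m Ch^T) + \tr (Ch *m dPh *m Ch^T) +
  (- 2%:R * (\tr (dX^T *m M *m X *m Mh) + \tr (X^T *m M *m dX *m Mh)) +
   (\tr (dPh *m Mh *m Ph *m Mh) + \tr (Ph *m Mh *m dPh *m Mh)))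
  = \tr (E^T *m (2%:R *: (A *m V *m (X^T *m K + Ph *m L)
                  + B *m B^T *m (K + W *m L)))).
Proof.
move=> hEa hEb hBh hM hMh hPh hL hK hLe hdX hdP.
have eK : A^T *m K + K *m Ah = C^T *m Ch + 2%:R *: (M *m X *m Mh).
  by apply/eqP; rewrite -subr_eq0 opprD addrA hK.
have eL : Ah^T *m L + L *m Ah = - (Ch^T *m Ch + 2%:R *: (Mh *m Ph *m Mh)).
  by apply/eqP; rewrite -addr_eq0 addrA hLe.
have f1 : \tr (C *m dX *m Ch^T) = \tr (dX^T *m C^T *m Ch).
  by rewrite trT trmxK trmx_mul mxtrace_mulC; try rewrite -!mulmxA.
have f2 : \tr (X^T *m M *m dX *m Mh) = \tr (dX^T *m M *m X *m Mh).
  by rewrite trT !trmx_mul trmxK hM hMh mxtrace_mulC; try rewrite -!mulmxA.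
have f3 := adj_trick K hdX.
rewrite trmxK eK mulmxDr mxtraceD -scalemxAr mxtraceZ linearD /= !trmx_mul !trmxK
  mulmxDl mxtraceD in f3.
have g1 : \tr (Ch *m dPh *m Ch^T) = \tr (dPh^T *m Ch^T *m Ch).
  by rewrite trT trmxK trmx_mul mxtrace_mulC; try rewrite -!mulmxA.
have g2 : \tr (dPh *m Mh *m Ph *m Mh) = \tr (dPh^T *m Mh *m Ph *m Mh).
  by rewrite trT !trmx_mul hMh hPh !mulmxA mxtrace_mulC; rewrite -!mulmxA.
have g3 : \tr (Ph *m Mh *m dPh *m Mh) = \tr (dPh *m Mh *m Ph *m Mh).
  by rewrite -mulmxA mxtrace_mulC; rewrite -!mulmxA.
have f4 := adj_trick L hdP.
rewrite trmxK eL mulmxN raddfN /= mulmxDr mxtraceD -scalemxAr mxtraceZ in f4.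
rewrite !linearD /= !trmx_mul !trmxK hPh !mulmxDl !mxtraceD in f4.
have g4 : \tr (Ph *m Ea^T *m L) = \tr (Ea *m Ph *m L).
  by rewrite trT !trmx_mul trmxK hPh hL mxtrace_mulC; try rewrite -!mulmxA.
have g5 : \tr (Bh *m Eb^T *m L) = \tr (Eb *m Bh^T *m L).
  by rewrite trT !trmx_mul !trmxK hL mxtrace_mulC; try rewrite -!mulmxA.
rewrite -!mulmxA in f4 g4 g5.
rewrite -!mulmxA in f3.
rewrite -!mulmxA in f1 f2 g1 g2 g3.
rewrite -scalemxAr mxtraceZ !mulmxDr !mxtraceD.
rewrite hEa hEb hBh !trmx_mul !trmxK in f3 f4 g4 g5 *.
try rewrite -!mulmxA in f3.
try rewrite -!mulmxA in f4.
try rewrite -!mulmxA in g4.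
try rewrite -!mulmxA in g5.
try rewrite -!mulmxA.
lra.
Qed.

Lemma gradV_alg (R : realType) n r (A : 'M[R]_n)
  (C : 'M[R]_(1,n)) (M : 'M[R]_n) (W V E X K dX : 'M[R]_(n,r))
  (Ah Mh Ph L dPh : 'M[R]_r) (Fa : 'M[R]_r) :
  Fa = W^T *m A *m E -> Mh = V^T *m M *m V ->
  M^T = M -> Ph^T = Ph -> L^T = L ->
  A^T *m K + K *m Ah - C^T *m (C *m V) - 2%:R *: (M *m X *m Mh) = 0 ->
  Ah^T *m L + L *m Ah + (C *m V)^T *m (C *m V) + 2%:R *: (Mh *m Ph *m Mh) = 0 ->
  A *m dX + dX *m Ah^T + X *m Fa^T = 0 ->
  Ah *m dPh + dPh *m Ah^T + (Fa *m Ph + Ph *m Fa^T) = 0 ->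
  let Ch := C *m V in let dCh := C *m E in
  let dMh := E^T *m M *m V + V^T *m M *m E in
  - 2%:R * (\tr (C *m dX *m Ch^T) + \tr (C *m X *m dCh^T)) +
  (\tr (dCh *m Ph *m Ch^T) + \tr (Ch *m dPh *m Ch^T) + \tr (Ch *m Ph *m dCh^T)) +
  (- 2%:R * (\tr (dX^T *m M *m X *m Mh) + \tr (X^T *m M *m dX *m Mh)
              + \tr (X^T *m M *m X *m dMh)) +
   (\tr (dPh *m Mh *m Ph *m Mh) + \tr (Ph *m dMh *m Ph *m Mh)
    + \tr (Ph *m Mh *m dPh *m Mh) + \tr (Ph *m Mh *m Ph *m dMh)))
  = \tr (E^T *m (2%:R *: (A^T *m W *m (K^T *m X + L *m Ph)
                  + C^T *m C *m (V *m Ph - X)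
                  + 2%:R *: (M *m V *m (Ph *m (V^T *m M *m V) *m Ph
                                        - X^T *m M *m X))))).
Proof.
move=> hFa hMhd hM hPh hL hK hLe hdX hdP Ch dCh dMh.
have hMh : Mh^T = Mh by rewrite hMhd !trmx_mul trmxK hM mulmxA.
rewrite -hMhd.
have eK : A^T *m K + K *m Ah = C^T *m Ch + 2%:R *: (M *m X *m Mh).
  by apply/eqP; rewrite -subr_eq0 opprD addrA hK.
have eL : Ah^T *m L + L *m Ah = - (Ch^T *m Ch + 2%:R *: (Mh *m Ph *m Mh)).
  by apply/eqP; rewrite -addr_eq0 addrA hLe.
have f1 : \tr (C *m dX *m Ch^T) = \tr (dX^T *m C^T *m Ch).
  by rewrite trT trmxK trmx_mul mxtrace_mulC; try rewrite -!mulmxA.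
have f2 : \tr (X^T *m M *m dX *m Mh) = \tr (dX^T *m M *m X *m Mh).
  by rewrite trT !trmx_mul trmxK hM hMh mxtrace_mulC; try rewrite -!mulmxA.
have f3 := adj_trick K hdX.
rewrite trmxK eK mulmxDr mxtraceD -scalemxAr mxtraceZ !trmx_mul !trmxK in f3.
have g1 : \tr (Ch *m dPh *m Ch^T) = \tr (dPh^T *m Ch^T *m Ch).
  by rewrite trT trmxK trmx_mul mxtrace_mulC; try rewrite -!mulmxA.
have g2 : \tr (dPh *m Mh *m Ph *m Mh) = \tr (dPh^T *m Mh *m Ph *m Mh).
  by rewrite trT !trmx_mul hMh hPh !mulmxA mxtrace_mulC; try rewrite -!mulmxA.
have g3 : \tr (Ph *m Mh *m dPh *m Mh) = \tr (dPh *m Mh *m Ph *m Mh).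
  by rewrite -mulmxA mxtrace_mulC; try rewrite -!mulmxA.
have f4 := adj_trick L hdP.
rewrite trmxK eL mulmxN raddfN /= mulmxDr mxtraceD -scalemxAr mxtraceZ in f4.
rewrite !linearD /= !trmx_mul !trmxK hPh !mulmxDl !mxtraceD in f4.
have g4 : \tr (Ph *m Fa^T *m L) = \tr (Fa *m Ph *m L).
  by rewrite trT !trmx_mul trmxK hPh hL mxtrace_mulC; try rewrite -!mulmxA.
have h1 : \tr (dCh *m Ph *m Ch^T) = \tr (Ch *m Ph *m dCh^T).
  by rewrite trT trmxK trmx_mul hPh mulmxA.
have h2 : \tr (Ph *m dMh *m Ph *m Mh) = \tr (Ph *m Mh *m Ph *m dMh).
  by rewrite -mulmxA mxtrace_mulC; try rewrite -!mulmxA.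
have h3 : \tr (X^T *m M *m X *m (V^T *m M *m E)) = \tr (E^T *m M *m V *m X^T *m M *m X).
  by rewrite trT !trmx_mul !trmxK hM; try rewrite -!mulmxA.
have h4 : \tr (X^T *m M *m X *m (E^T *m M *m V)) = \tr (E^T *m M *m V *m X^T *m M *m X).
  by rewrite mxtrace_mulC; try rewrite -!mulmxA.
have h5 : \tr (Ph *m Mh *m Ph *m (V^T *m M *m E)) = \tr (E^T *m M *m V *m Ph *m Mh *m Ph).
  by rewrite trT !trmx_mul !trmxK hM hMh hPh; try rewrite -!mulmxA.
have h6 : \tr (Ph *m Mh *m Ph *m (E^T *m M *m V)) = \tr (E^T *m M *m V *m Ph *m Mh *m Ph).
  by rewrite mxtrace_mulC; try rewrite -!mulmxA.
have r1 : \tr (Fa *m X^T *m K) = \tr (E^T *m A^T *m W *m K^T *m X).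
  rewrite hFa trT !trmx_mul !trmxK !mulmxA -(mulmxA (K^T *m X)) -(mulmxA (K^T *m X)).
  by rewrite mxtrace_mulC; try rewrite -!mulmxA.
have r2 : \tr (Fa *m Ph *m L) = \tr (E^T *m A^T *m W *m L *m Ph).
  rewrite hFa trT !trmx_mul !trmxK hPh hL !mulmxA -(mulmxA (L *m Ph)) -(mulmxA (L *m Ph)).
  by rewrite mxtrace_mulC; try rewrite -!mulmxA.
have r3 : \tr (C *m X *m dCh^T) = \tr (E^T *m C^T *m C *m X).
  by rewrite /dCh trmx_mul mxtrace_mulC; try rewrite -!mulmxA.
have r4 : \tr (Ch *m Ph *m dCh^T) = \tr (E^T *m C^T *m C *m V *m Ph).
  by rewrite /dCh /Ch trmx_mul mxtrace_mulC; try rewrite -!mulmxA.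
rewrite /dMh !mulmxDr !mulmxDl !mxtraceD in h2 *.
rewrite -scalemxAr mxtraceZ !mulmxDr !mxtraceD.
rewrite !mulmxN raddfN /= -scalemxAr mxtraceZ !mulmxDr !mxtraceD !mulmxN raddfN /=.
rewrite /Ch /dCh in f1 f3 g1 f4 h1 r3 r4 *.
rewrite !trmx_mul in f1 f3 g1 f4 h1 r3 r4 *.
try rewrite -!mulmxA in f1. try rewrite -!mulmxA in f2. try rewrite -!mulmxA in f3.
try rewrite -!mulmxA in f4. try rewrite -!mulmxA in g1. try rewrite -!mulmxA in g2.
try rewrite -!mulmxA in g3. try rewrite -!mulmxA in g4. try rewrite -!mulmxA in h1.
try rewrite -!mulmxA in h2. try rewrite -!mulmxA in h3. try rewrite -!mulmxA in h4.
try rewrite -!mulmxA in h5. try rewrite -!mulmxA in h6. try rewrite -!mulmxA in r1.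
try rewrite -!mulmxA in r2. try rewrite -!mulmxA in r3. try rewrite -!mulmxA in r4.
try rewrite -!mulmxA.
lra.
Qed.

Lemma tr_delta (R : realType) p q (i : 'I_p) (j : 'I_q) (Y : 'M[R]_(p,q)) :
  \tr ((delta_mx i j)^T *m Y) = Y i j.
Proof.
rewrite trmx_delta /mxtrace (bigD1 j) //= big1 => [|k kj].
  rewrite addr0 mxE (bigD1 i) //= big1 => [|l li]; first by rewrite mxE !eqxx mul1r addr0.
  by rewrite mxE (negbTE li) andbF mul0r.
rewrite mxE big1 // => l _; by rewrite mxE (negbTE kj) mul0r.
Qed.

Lemma uniq_sol (R : realType) p q (F : 'M[R]_p) (G : 'M[R]_q) H Y1 Y2 :
  hurwitz F -> hurwitz G ->
  F *m Y1 + Y1 *m G + H = 0 -> F *m Y2 + Y2 *m G + H = 0 -> Y1 = Y2.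
Proof.
move=> hF hG e1 e2.
have inj := fun Z => @sylv_inj R p q F G Z hF hG.
by rewrite -(sylv_eq e1 inj) -(sylv_eq e2 inj).
Qed.

Lemma sym_sol (R : realType) p (F : 'M[R]_p) Y Q :
  hurwitz F -> F *m Y + Y *m F^T + Q = 0 -> Q^T = Q -> Y^T = Y.
Proof.
move=> hF e hQ; apply: (uniq_sol hF (hurwitz_tr hF) _ e).
have := congr1 trmx e; rewrite !linearD /= !trmx_mul trmxK hQ linear0.
by rewrite (addrC (Y^T *m _)).
Qed.

Lemma mxd_mull (R : realType) p q s (A : 'M[R]_(p,q)) (f : R -> 'M[R]_(q,s)) Df :
  mxd f Df -> mxd (fun t => A *m f t) (A *m Df).
Proof.
move=> h; apply: mxd_eq (mxd_mul (mxd_cst A) h) => //.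
by rewrite mul0mx add0r.
Qed.

Lemma mxd_mulr (R : realType) p q s (A : 'M[R]_(q,s)) (f : R -> 'M[R]_(p,q)) Df :
  mxd f Df -> mxd (fun t => f t *m A) (Df *m A).
Proof.
move=> h; apply: mxd_eq (mxd_mul h (mxd_cst A)) => //.
by rewrite mulmx0 addr0.
Qed.

Lemma sd_scal (R : realType) (c : R) (f : R -> R) a :
  is_derive (0:R) (1:R) f a -> is_derive (0:R) (1:R) (fun t => c * f t) (c * a).
Proof.
move=> h; apply: sd_eq (sd_mul (sd_cst c) h) => //.
by rewrite mulr0 addr0.
Qed.

Lemma mxd_aff (R : realType) p q (W E : 'M[R]_(p,q)) : mxd (fun t => W + t *: E) E.
Proof. by apply: mxd_eq (mxd_add (mxd_cst W) (mxd_lin E)) => //; rewrite add0r. Qed.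

Lemma partW (R : realType) (n m r : nat)
  (A : 'M[R]_n) (B : 'M[R]_(n, m)) (C : 'M[R]_(1, n)) (M : 'M[R]_n)
  (W V : 'M[R]_(n, r)) (X : 'M[R]_(n, r)) (Ph : 'M[R]_r)
  (K : 'M[R]_(n, r)) (L : 'M[R]_r) :
  hurwitz A -> M^T = M ->
  hurwitz (W^T *m A *m V) ->
  Ph^T = Ph -> L^T = L ->
  A *m X + X *m (W^T *m A *m V)^T + B *m (W^T *m B)^T = 0 ->
  (W^T *m A *m V) *m Ph + Ph *m (W^T *m A *m V)^T
    + (W^T *m B) *m (W^T *m B)^T = 0 ->
  A^T *m K + K *m (W^T *m A *m V) - C^T *m (C *m V)
    - 2%:R *: (M *m X *m (V^T *m M *m V)) = 0 ->
  (W^T *m A *m V)^T *m L + L *m (W^T *m A *m V) + (C *m V)^T *m (C *m V)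
    + 2%:R *: ((V^T *m M *m V) *m Ph *m (V^T *m M *m V)) = 0 ->
  (forall (i : 'I_n) (j : 'I_r),
     is_derive (0 : R) (1 : R)
       (fun t : R => J1 A B C M (W + t *: delta_mx i j) V)
       ((2%:R *: (A *m V *m (X^T *m K + Ph *m L)
                  + B *m B^T *m (K + W *m L))) i j)).
Proof.
move=> hA hM hAh hPs hLs hX hPh hK hL i j.
set E := delta_mx i j.
pose Wt t := W + t *: E.
have dW : mxd Wt E := mxd_aff W E.
have dAh : mxd (fun t => (Wt t)^T *m A *m V) (E^T *m A *m V).
  exact: (mxd_mulr V (mxd_mulr A (mxd_tr dW))).
have dBh : mxd (fun t => (Wt t)^T *m B) (E^T *m B) by exact: (mxd_mulr B (mxd_tr dW)).
have W0 : Wt 0 = W by rewrite /Wt scale0r addr0.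
have injX : forall Y, A *m Y + Y *m ((Wt 0)^T *m A *m V)^T = 0 -> Y = 0.
  by rewrite W0 => Y; apply: sylv_inj hA (hurwitz_tr hAh).
have injP : forall Y, ((Wt 0)^T *m A *m V) *m Y + Y *m ((Wt 0)^T *m A *m V)^T = 0 -> Y = 0.
  by rewrite W0 => Y; apply: sylv_inj hAh (hurwitz_tr hAh).
have [dX [hdX [e0X edX]]] := sylv_der (mxd_cst A) (mxd_tr dAh) (mxd_mull B (mxd_tr dBh)) injX.
have [dP [hdP [e0P edP]]] := sylv_der dAh (mxd_tr dAh) (mxd_mul dBh (mxd_tr dBh)) injP.
rewrite W0 in e0X edX e0P edP.
have eX := uniq_sol hA (hurwitz_tr hAh) e0X hX.
have eP := uniq_sol hAh (hurwitz_tr hAh) e0P hPh.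
rewrite eX mul0mx add0r in edX.
rewrite eP in edP.
set Ch := C *m V. set Mh := V^T *m M *m V.
have hMh : Mh^T = Mh by rewrite /Mh !trmx_mul trmxK hM mulmxA.
pose P := sylv A A^T (B *m B^T).
have d1 := mxd_add (mxd_sub (mxd_cst (C *m P *m C^T))
   (mxd_scale 2%:R (mxd_mulr Ch^T (mxd_mull C hdX)))) (mxd_mulr Ch^T (mxd_mull Ch hdP)).
have dXX := mxd_mulr Mh (mxd_mul (mxd_mulr M (mxd_tr hdX)) hdX).
have dPP := mxd_mulr Mh (mxd_mul (mxd_mulr Mh hdP) hdP).
have J := sd_add (sd_trace d1) (sd_add (sd_add (sd_cst (\tr (P *m M *m P *m M)))
   (sd_opp (sd_scal 2%:R (sd_trace dXX)))) (sd_trace dPP)).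
apply: (sd_eq _ _ J); first by apply/funext => t.
rewrite /= W0 eX eP -tr_delta.
rewrite -(gradW_alg (Ah := W^T *m A *m V) (Bh := W^T *m B) (Ch := Ch) (Ea := E^T *m A *m V)
   (Eb := E^T *m B) (dX := dX) (dPh := dP) erefl erefl erefl hM hMh hPs hLs hK hL edX edP).
rewrite !mulmxDl !mxtraceD sub0r raddfN /= mxtraceZ.
lra.
Qed.

Lemma partV (R : realType) (n m r : nat)
  (A : 'M[R]_n) (B : 'M[R]_(n, m)) (C : 'M[R]_(1, n)) (M : 'M[R]_n)
  (W V : 'M[R]_(n, r)) (X : 'M[R]_(n, r)) (Ph : 'M[R]_r)
  (K : 'M[R]_(n, r)) (L : 'M[R]_r) :
  hurwitz A -> M^T = M ->
  hurwitz (W^T *m A *m V) ->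
  Ph^T = Ph -> L^T = L ->
  A *m X + X *m (W^T *m A *m V)^T + B *m (W^T *m B)^T = 0 ->
  (W^T *m A *m V) *m Ph + Ph *m (W^T *m A *m V)^T
    + (W^T *m B) *m (W^T *m B)^T = 0 ->
  A^T *m K + K *m (W^T *m A *m V) - C^T *m (C *m V)
    - 2%:R *: (M *m X *m (V^T *m M *m V)) = 0 ->
  (W^T *m A *m V)^T *m L + L *m (W^T *m A *m V) + (C *m V)^T *m (C *m V)
    + 2%:R *: ((V^T *m M *m V) *m Ph *m (V^T *m M *m V)) = 0 ->
  (forall (i : 'I_n) (j : 'I_r),
     is_derive (0 : R) (1 : R)
       (fun t : R => J1 A B C M W (V + t *: delta_mx i j))
       ((2%:R *: (A^T *m W *m (K^T *m X + L *m Ph)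
                  + C^T *m C *m (V *m Ph - X)
                  + 2%:R *: (M *m V *m (Ph *m (V^T *m M *m V) *m Ph
                                        - X^T *m M *m X)))) i j)).
Proof.
move=> hA hM hAh hPs hLs hX hPh hK hL i j.
set E := delta_mx i j.
pose Vt t := V + t *: E.
have dV : mxd Vt E := mxd_aff V E.
have dAh : mxd (fun t => W^T *m A *m Vt t) (W^T *m A *m E) by exact: (mxd_mull (W^T *m A) dV).
have dCh : mxd (fun t => C *m Vt t) (C *m E) by exact: (mxd_mull C dV).
have dMh := mxd_mul (mxd_mulr M (mxd_tr dV)) dV.
have V0 : Vt 0 = V by rewrite /Vt scale0r addr0.
have injX : forall Y, A *m Y + Y *m (W^T *m A *m Vt 0)^T = 0 -> Y = 0.
  by rewrite V0 => Y; apply: sylv_inj hA (hurwitz_tr hAh).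
have injP : forall Y, (W^T *m A *m Vt 0) *m Y + Y *m (W^T *m A *m Vt 0)^T = 0 -> Y = 0.
  by rewrite V0 => Y; apply: sylv_inj hAh (hurwitz_tr hAh).
have [dX [hdX [e0X edX]]] := sylv_der (mxd_cst A) (mxd_tr dAh) (mxd_cst (B *m (W^T *m B)^T)) injX.
have [dP [hdP [e0P edP]]] := sylv_der dAh (mxd_tr dAh) (mxd_cst (W^T *m B *m (W^T *m B)^T)) injP.
rewrite V0 in e0X edX e0P edP.
have eX := uniq_sol hA (hurwitz_tr hAh) e0X hX.
have eP := uniq_sol hAh (hurwitz_tr hAh) e0P hPh.
rewrite eX mul0mx add0r addr0 in edX.
rewrite eP addr0 in edP.
pose P := sylv A A^T (B *m B^T).
have d1 := mxd_add (mxd_sub (mxd_cst (C *m P *m C^T))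
   (mxd_scale 2%:R (mxd_mul (mxd_mull C hdX) (mxd_tr dCh))))
   (mxd_mul (mxd_mul dCh hdP) (mxd_tr dCh)).
have dXX := mxd_mul (mxd_mul (mxd_mulr M (mxd_tr hdX)) hdX) dMh.
have dPP := mxd_mul (mxd_mul (mxd_mul hdP dMh) hdP) dMh.
have J := sd_add (sd_trace d1) (sd_add (sd_add (sd_cst (\tr (P *m M *m P *m M)))
   (sd_opp (sd_scal 2%:R (sd_trace dXX)))) (sd_trace dPP)).
apply: (sd_eq _ _ J); first by apply/funext => t.
rewrite /= V0 eX eP -tr_delta.
have G := gradV_alg (Ah := W^T *m A *m V) (E := E) (Fa := W^T *m A *m E)
   (Mh := V^T *m M *m V) (dX := dX) (dPh := dP) erefl erefl hM hPs hLs hK hL edX edP.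
rewrite /= in G; rewrite -G.
rewrite !mulmxDl !mulmxDr sub0r !(mxtraceD, raddfN, mxtraceZ) /=.
rewrite mxtraceZ mxtraceD.
lra.
Qed.

Theorem theorem1 (R : realType) (n m r : nat)
  (A : 'M[R]_n) (B : 'M[R]_(n, m)) (C : 'M[R]_(1, n)) (M : 'M[R]_n)
  (W V : 'M[R]_(n, r))
  (P : 'M[R]_n) (X : 'M[R]_(n, r)) (Ph : 'M[R]_r)
  (K : 'M[R]_(n, r)) (L : 'M[R]_r) :
  hurwitz A -> M^T = M -> W^T *m V = 1%:M ->
  hurwitz (W^T *m A *m V) ->
  A *m P + P *m A^T + B *m B^T = 0 ->
  A *m X + X *m (W^T *m A *m V)^T + B *m (W^T *m B)^T = 0 ->
  (W^T *m A *m V) *m Ph + Ph *m (W^T *m A *m V)^T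
    + (W^T *m B) *m (W^T *m B)^T = 0 ->
  A^T *m K + K *m (W^T *m A *m V) - C^T *m (C *m V)
    - 2%:R *: (M *m X *m (V^T *m M *m V)) = 0 ->
  (W^T *m A *m V)^T *m L + L *m (W^T *m A *m V) + (C *m V)^T *m (C *m V)
    + 2%:R *: ((V^T *m M *m V) *m Ph *m (V^T *m M *m V)) = 0 ->
  (forall (i : 'I_n) (j : 'I_r),
     is_derive (0 : R) (1 : R)
       (fun t : R => J1 A B C M (W + t *: delta_mx i j) V)
       ((2%:R *: (A *m V *m (X^T *m K + Ph *m L)
                  + B *m B^T *m (K + W *m L))) i j)) /\
  (forall (i : 'I_n) (j : 'I_r),
     is_derive (0 : R) (1 : R)
       (fun t : R => J1 A B C M W (V + t *: delta_mx i j))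
       ((2%:R *: (A^T *m W *m (K^T *m X + L *m Ph)
                  + C^T *m C *m (V *m Ph - X)
                  + 2%:R *: (M *m V *m (Ph *m (V^T *m M *m V) *m Ph
                                        - X^T *m M *m X)))) i j)).
Proof.
move=> hA hM hWV hAh hP hX hPh hK hL.
have hPs : Ph^T = Ph.
  apply: (sym_sol hAh hPh).
  by rewrite trmx_mul trmxK.
have hMh : (V^T *m M *m V)^T = V^T *m M *m V by rewrite !trmx_mul trmxK hM mulmxA.
have hLs : L^T = L.
  have hL2 := hL; rewrite -addrA in hL2.
  apply: (sym_sol (hurwitz_tr hAh)); first by rewrite trmxK; exact: hL2.
  by rewrite linearD linearZ /= !trmx_mul !trmxK hM hPs !mulmxA.
split.
  exact: partW hA hM hAh hPs hLs hX hPh hK hL.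
exact: partV hA hM hAh hPs hLs hX hPh hK hL.
Qed.
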